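(* Let $A$ be a finite fast set of standard functions which is totally ordered by $<$, with elements $a_0<\dots<a_{n-1}$ and greatest element $a_{\max}$. Suppose that $A^\circ\in\mathcal{S}$ and that for every $i<n-1$, if $a_i\sqsubset a_{\max}$ then $a_{\max}^\circ<a_i$. Then $A\in\mathcal{S}$.
   Context: $\mathrm{Homeo}_+(I)$ acts on $I=[0,1]$ on the right, composition left to right. Support $\mathrm{supt}(f)=\{t:tf\ne t\}$; extended support = interior of its closure; orbitals = components of the support, endpoints = transition points; a bump has exactly one orbital, positive if $tf>t$ there, else negative; the bump of $g$ on an orbital $J$ agrees with $g$ on $J$, identity elsewhere. A marking assigns to each bump $a$ with support $(u,v)$ a point $s_a\in(u,v)$; feet of $a$: $(u,s_a)$ and $[t_a,v)$ with $t_a=s_aa$ ($a$ positive) or $s_aa^{-1}$ ($a$ negative). A marked function has finitely many bumps, each marked. A finite set of marked functions is fast if no bump occurs in two of its elements and distinct bumps have disjoint feet. A standard function is a marked function whose extended support is an interval, with all positive bumps right of all negative bumps, and #positive $-$ #negative bumps $\in\{0,1\}$. For standard $f,g$: $f\ll g$ iff extended supports disjoint with $f$'s to the left; $f\sqsubset g$ iff closure of extended support of $f$ lies in extended support of $g$; $f<g$ iff $f\ll g$ or $f\sqsubset g$. $f^\circ$: if $f$ has $>2$ orbitals, $f$ restricted to the union of its non-extreme orbitals (identity elsewhere, markers inherited); if $f$ has 1 or 2 orbitals and the left foot of its positive bump is $(r,s)$, a positive bump with support $(r,s)$ (arbitrary marker). $(f,g)$ is a standard pair if $\{f,g\}$ is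 fast and either $f\ll g$ or ($f\sqsubset g$ and $(g^\circ,f)$ is a standard pair). $\mathcal{S}$ = finite sets of standard functions, pairwise $<$-comparable, each pair $f<g$ a standard pair. For $f<g$ the oscillation $o(f,g)$ is the number of orbitals of $g$ containing a transition point of $f$. The rotation of $A$ is $A^\circ:=(A\setminus\{a_{\max}\})\cup\{a_{\max}^\circ\}$ if there is $i<|A|-1$ with $o(a_i,a_{\max})>0$, and $A^\circ:=A\setminus\{a_{\max}\}$ otherwise. *)

(* Defs.v *)
From HB Require Import structures.
From mathcomp Require Import all_boot all_order all_algebra.
From mathcomp Require Import all_classical all_reals topology normedtype.
Import numFieldNormedType.Exports.
Set Implicit Arguments. Unset Strict Implicit. Unset Printing Implicit Defensive.
Import Order.TTheory GRing.Theory Num.Theory.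
Local Open Scope ring_scope.
Local Open Scope classical_set_scope.

Section Fast.
Context {R : realType}.

(* Homeo_+(I): increasing homeomorphisms of [0,1], extended by the identity
   outside [0,1].  The (right) action t f is written [f t]. *)
Definition homeoI (f : R -> R) : Prop :=
  [/\ continuous f, {homo f : x y / x < y}, f 0 = 0, f 1 = 1
    & forall t, (t < 0) || (1 < t) -> f t = t].

Definition supt (f : R -> R) : set R := [set t | f t != t].
Definition ext_supt (f : R -> R) : set R := interior (closure (supt f)).

Definition is_orbital (f : R -> R) (u v : R) : Prop :=
  [/\ u < v, f u = u, f v = v & forall t, u < t < v -> f t != t].

(* a marked bump of a marked function: its orbital (bu,bv) and marker bs *)
Record bumpdat := BD { bu : R; bv : R; bs : R }.

Record mfun := MFun { mf : R -> R; mbumps : seq bumpdat }.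

Definition bump0 := BD 0 0 0.
Definition mfun0 := MFun id [::].
Definition bmp (F : mfun) k := nth bump0 (mbumps F) k.

Definition marked (F : mfun) : Prop :=
  [/\ homeoI (mf F),
      (forall k, (k < size (mbumps F))%N ->
         is_orbital (mf F) (bu (bmp F k)) (bv (bmp F k))
         /\ bu (bmp F k) < bs (bmp F k) < bv (bmp F k)),
      (forall k l, (k < size (mbumps F))%N -> (l < size (mbumps F))%N ->
         k <> l -> bv (bmp F k) <= bu (bmp F l) \/ bv (bmp F l) <= bu (bmp F k))
    & (forall t, mf F t != t -> exists2 k, (k < size (mbumps F))%N &
         bu (bmp F k) < t < bv (bmp F k))].

Definition bumpfun (F : mfun) (b : bumpdat) : R -> R :=
  fun t => if bu b < t < bv b then mf F t else t.

Definition posb (F : mfun) (b : bumpdat) : bool := bs b < mf F (bs b).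

(* feet: (u, s_a) and [t_a, v), with t_a = s_a a (a positive) or
   s_a a^{-1} (a negative); for a negative, t >= t_a iff t a >= s_a. *)
Definition lfoot (F : mfun) (b : bumpdat) : set R :=
  [set t | bu b < t < bs b].
Definition rfoot (F : mfun) (b : bumpdat) : set R :=
  [set t | t < bv b /\ (if posb F b then mf F (bs b) <= t else bs b <= mf F t)].
Definition feet (F : mfun) (b : bumpdat) : set R := lfoot F b `|` rfoot F b.

Definition fast (L : seq mfun) : Prop :=
  forall i j k l, (i < size L)%N -> (j < size L)%N ->
    (k < size (mbumps (nth mfun0 L i)))%N ->
    (l < size (mbumps (nth mfun0 L j)))%N ->
    (i, k) <> (j, l) ->
    let F := nth mfun0 L i in let G := nth mfun0 L j in
    (i <> j -> bumpfun F (bmp F k) <> bumpfun G (bmp G l))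
    /\ feet F (bmp F k) `&` feet G (bmp G l) = set0.

Definition standard (F : mfun) : Prop :=
  [/\ marked F,
      (exists a b, a < b /\ ext_supt (mf F) = [set t | a < t < b]),
      (forall k l, (k < size (mbumps F))%N -> (l < size (mbumps F))%N ->
         ~~ posb F (bmp F k) -> posb F (bmp F l) ->
         bv (bmp F k) <= bu (bmp F l))
    & let p := count (posb F) (mbumps F) in
      let q := count (predC (posb F)) (mbumps F) in
      (p == q) || (p == q.+1)].

Definition ll (F G : mfun) : Prop :=
  forall x y, ext_supt (mf F) x -> ext_supt (mf G) y -> x < y.
Definition sq (F G : mfun) : Prop :=
  closure (ext_supt (mf F)) `<=` ext_supt (mf G).
Definition lt (F G : mfun) : Prop := ll F G \/ sq F G.

(* A choice of "a positive bump with support (r,s) (arbitrary marker)":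
   c r s = (bump function, marker). *)
Definition choice_ok (c : R -> R -> (R -> R) * R) : Prop :=
  forall r s, 0 <= r -> r < s -> s <= 1 ->
    let b := (c r s).1 in let m := (c r s).2 in
    [/\ homeoI b, supt b = [set t | r < t < s], r < m < s & m < b m].

Definition leftmost (F : mfun) (b : bumpdat) : bool :=
  all (fun b' => bu b <= bu b') (mbumps F).
Definition rightmost (F : mfun) (b : bumpdat) : bool :=
  all (fun b' => bv b' <= bv b) (mbumps F).

Definition circ (c : R -> R -> (R -> R) * R) (F : mfun) : mfun :=
  if (2 < size (mbumps F))%N then
    let inner := [seq b <- mbumps F | ~~ leftmost F b && ~~ rightmost F b] in
    MFun (fun t => if has (fun b => bu b < t < bv b) inner then mf F t else t)
         inner
  else
    let p := nth bump0 (mbumps F) (find (posb F) (mbumps F)) in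
    let r := bu p in let s := bs p in
    MFun (c r s).1 [:: BD r s (c r s).2].

Inductive std_pair (c : R -> R -> (R -> R) * R) : mfun -> mfun -> Prop :=
| SP_ll F G : fast [:: F; G] -> ll F G -> std_pair c F G
| SP_sq F G : fast [:: F; G] -> sq F G -> std_pair c (circ c G) F ->
              std_pair c F G.

Definition inS (c : R -> R -> (R -> R) * R) (A : seq mfun) : Prop :=
  [/\ forall i, (i < size A)%N -> standard (nth mfun0 A i),
      forall i j, (i < size A)%N -> (j < size A)%N -> i <> j ->
        lt (nth mfun0 A i) (nth mfun0 A j) \/ lt (nth mfun0 A j) (nth mfun0 A i)
    & forall i j, (i < size A)%N -> (j < size A)%N ->
        lt (nth mfun0 A i) (nth mfun0 A j) ->
        std_pair c (nth mfun0 A i) (nth mfun0 A j)].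

(* number of orbitals of G containing a transition point of F *)
Definition osc (F G : mfun) : nat :=
  count (fun b => has (fun b' => (bu b < bu b' < bv b) || (bu b < bv b' < bv b))
                      (mbumps F)) (mbumps G).

(* rotation of A = [:: a_0; ...; a_{n-1}] listed in <-increasing order *)
Definition rotation (c : R -> R -> (R -> R) * R) (A : seq mfun) : seq mfun :=
  let n := size A in
  let amax := nth mfun0 A n.-1 in
  if has (fun i => (0 < osc (nth mfun0 A i) amax)%N) (iota 0 n.-1)
  then rcons (take n.-1 A) (circ c amax)
  else take n.-1 A.

End Fast.

(* Main.v *)
Require Import Defs.
From mathcomp Require Import all_boot all_order all_algebra.
From mathcomp Require Import all_classical all_reals topology normedtype.
Import numFieldNormedType.Exports.
Import Order.TTheory GRing.Theory Num.Theory.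
Local Open Scope ring_scope.
Section Helpers.
Local Open Scope classical_set_scope.

Lemma nbhs_oo {R : realType} {u v x : R} : u < x < v -> nbhs x [set t | u < t < v].
Proof.
move=> h; have := @near_in_itvoo R u v x; rewrite in_itv /= => /(_ h).
by apply: filterS => z; rewrite in_itv.
Qed.

Lemma closure_left {R : realType} {a b : R} : a < b -> closure [set t | a < t < b] a.
Proof.
move=> ab B /nbhs_ballP [e /= e0 sB].
set d := Num.min e (b - a).
have d0 : 0 < d by rewrite lt_min e0 subr_gt0 ab.
exists (a + d / 2); split.
  rewrite /= ltrDl divr_gt0 //=.
  have : d <= b - a by rewrite /d ge_min lexx orbT.
  by move=> h; rewrite -ltrBrDl; apply: lt_le_trans h; rewrite gtr_pMr // invf_lt1 // ltr1n.
apply: sB; rewrite ball_itv /= in_itv /=; apply/andP; split.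
  by rewrite ltrBlDr -addrA ltrDl addr_gt0 // divr_gt0.
rewrite ltrD2l; have : d <= e by rewrite /d ge_min lexx.
by move=> h; apply: lt_le_trans h; rewrite gtr_pMr // invf_lt1 // ltr1n.
Qed.

Lemma midp {R : realType} {a b : R} : a < b -> a < (a + b) / 2 < b.
Proof. by move=> h; have [-> ->] := midf_lt h. Qed.

Lemma std_ext (R : realType) (F : @mfun R) : standard F ->
  exists a b, a < b /\ ext_supt (mf F) = [set t | a < t < b].
Proof. by case. Qed.

Lemma sLt_irr (R : realType) (F : @mfun R) : standard F -> ~ lt F F.
Proof.
move=> /std_ext [a [b [ab E]]] [] H.
  have hm := midp ab.
  have : ext_supt (mf F) ((a+b)/2) by rewrite E.
  by move=> h; have := H _ _ h h; rewrite ltxx.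
have := H a; rewrite E => /(_ (closure_left ab)) /=; by rewrite ltxx.
Qed.

Lemma sLt_asym (R : realType) (F G : @mfun R) : standard F -> standard G ->
  lt F G -> lt G F -> False.
Proof.
move=> /std_ext [a [b [ab E]]] /std_ext [a' [b' [ab' E']]].
have xF : ext_supt (mf F) ((a+b)/2) by rewrite E; apply: midp.
have xG : ext_supt (mf G) ((a'+b')/2) by rewrite E'; apply: midp.
case=> H1; case=> H2.
- by have := lt_trans (H1 _ _ xF xG) (H2 _ _ xG xF); rewrite ltxx.
- have := H2 _ (subset_closure xG).
  by move=> h; have := H1 _ _ h xG; rewrite ltxx.
- have := H1 _ (subset_closure xF).
  by move=> h; have := H2 _ _ h xF; rewrite ltxx.
- have := H1 a; rewrite E => /(_ (closure_left ab)) h.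
  have := H2 _ (subset_closure h); rewrite E /=; by rewrite ltxx.
Qed.

Lemma osc_pos (R : realType) (F G : @mfun R) : standard F -> marked G ->
  (forall k l, (k < size (mbumps F))%N -> (l < size (mbumps G))%N ->
     feet F (bmp F k) `&` feet G (bmp G l) = set0) ->
  sq F G -> (0 < osc F G)%N.
Proof.
move=> sF mG Hfeet Hsq.
have [a [b [ab E]]] := @std_ext _ _ sF.
case: sF => mF _ _ _.
case: mF => _ Hb _ Hcov.
have [t0 Ht0] : exists t, mf F t != t.
  apply/not_existsP => /= hall.
  have : ext_supt (mf F) ((a+b)/2) by rewrite E; apply: midp.
  rewrite /ext_supt /interior /= => /nbhs_singleton h.
  case: (h setT filterT) => y [] /=; rewrite /supt /= => Hy _.
  by apply: (hall y).
have [k hk /andP [hu0 hv0]] := Hcov _ Ht0.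
have [[uv _ _ Horb] /andP [us sv]] := Hb _ hk.
set u := bu (bmp F k) in uv Horb us hu0; set s := bs (bmp F k) in us sv.
set v := bv (bmp F k) in uv Horb sv hv0.
have [hx1 hx2] := midf_lt us.
set x := (u + s) / 2 in hx1 hx2.
have xF : ext_supt (mf F) x.
  rewrite /ext_supt /interior /=.
  apply: filterS (nbhs_oo (u:=u) (v:=v) _); last by rewrite hx1 /= (lt_trans hx2 sv).
  by move=> y hy; apply: subset_closure; apply: Horb.
have := interior_subset (Hsq _ (subset_closure xF)).
move=> /(_ _ (nbhs_oo (u:=u) (v:=s) _)); rewrite hx1 hx2 => /(_ isT).
case=> t [/= Ht /andP [ut ts]].
have [l hl /andP [hul hvl]] := (match mG with And4 _ _ _ c => c end) _ Ht.
have [_ /andP [ubl _]] := (match mG with And4 _ b _ _ => b end) _ hl.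
rewrite /osc -has_count; apply/(has_nthP bump0); exists l => //.
apply/(has_nthP bump0); exists k => //.
rewrite -/(bmp G l) -/(bmp F k) -/u; apply/orP; left; apply/negPn/negP => H1.
have ul : u <= bu (bmp G l).
  rewrite leNgt; apply/negP => h; move/negP: H1; apply.
  by rewrite h /= (lt_trans ut hvl).
set m := Num.min s (bs (bmp G l)).
have hm : bu (bmp G l) < m by rewrite lt_min (lt_trans hul ts) ubl.
have [hy1 hy2] := midf_lt hm.
have : (feet F (bmp F k) `&` feet G (bmp G l)) ((bu (bmp G l) + m) / 2).
  split; left; rewrite /lfoot /=; apply/andP; split.
  - exact: le_lt_trans ul hy1.
  - by apply: lt_le_trans hy2 _; rewrite /m ge_min lexx.
  - exact: hy1.
  - by apply: lt_le_trans hy2 _; rewrite /m ge_min lexx orbT.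
by rewrite Hfeet.
Qed.

Lemma fast_feet (R : realType) (A : seq (@mfun R)) i j : fast A ->
  (i < size A)%N -> (j < size A)%N -> i <> j ->
  forall k l, (k < size (mbumps (nth mfun0 A i)))%N ->
  (l < size (mbumps (nth mfun0 A j)))%N ->
  feet (nth mfun0 A i) (bmp (nth mfun0 A i) k) `&`
  feet (nth mfun0 A j) (bmp (nth mfun0 A j) l) = set0.
Proof.
move=> fA hi hj hij k l hk hl.
by case: (fA i j k l hi hj hk hl) => // -[].
Qed.

Lemma fast_pair (R : realType) (A : seq (@mfun R)) i j : fast A ->
  (i < size A)%N -> (j < size A)%N -> i <> j ->
  fast [:: nth mfun0 A i; nth mfun0 A j].
Proof.
move=> fA hi hj hij.
pose f n := if n is 0%N then i else j.
have key : forall n, (n < 2)%N -> nth mfun0 [:: nth mfun0 A i; nth mfun0 A j] n = nth mfun0 A (f n).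
  by case=> [|[|]].
have fs : forall n, (n < 2)%N -> (f n < size A)%N by case=> [|[|]].
have finj : forall n n', (n < 2)%N -> (n' < 2)%N -> n <> n' -> f n <> f n'.
  move=> n n' hn hn' hne; case: n hn hne => [|[|]] // _;
    case: n' hn' => [|[|]] // _ hne /=; by [|apply: nesym].
move=> i' j' k l hi' hj' hk hl hne.
rewrite /= in hi' hj'.
rewrite (key _ hi') (key _ hj') in hk hl *.
have := fA (f i') (f j') k l (fs _ hi') (fs _ hj') hk hl.
case: (eqVneq i' j') => [e|ne].
  subst j'; have hkl : k <> l by move=> e; apply: hne; rewrite e.
  move=> /(_ ltac:(by case)) [h1 h2]; split => // hh; by [].
move=> /(_ ltac:(by case=> /(finj _ _ hi' hj' (elimN eqP ne)))) [h1 h2].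
split => // _; exact: h1 (finj _ _ hi' hj' (elimN eqP ne)).
Qed.

End Helpers.

Theorem lemma4p6 (R : realType) (c : R -> R -> (R -> R) * R) (A : seq (@mfun R)) :
  choice_ok c ->
  (0 < size A)%N ->
  (forall i, (i < size A)%N -> standard (nth mfun0 A i)) ->
  fast A ->
  (forall i j, (i < j)%N -> (j < size A)%N -> lt (nth mfun0 A i) (nth mfun0 A j)) ->
  inS c (rotation c A) ->
  (forall i, (i < (size A).-1)%N ->
     sq (nth mfun0 A i) (nth mfun0 A (size A).-1) ->
     lt (circ c (nth mfun0 A (size A).-1)) (nth mfun0 A i)) ->
  inS c A.
Proof.
move=> _ n0 Hstd fA Hlt [S1 S2 S3] Hcirc.
set n := size A in n0 Hstd Hlt Hcirc *.
set m := n.-1 in Hcirc.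
have mn : (m < n)%N by rewrite /m prednK.
have stk : size (take m A) = m by rewrite size_takel // ltnW.
have R1 : forall i, (i < m)%N -> (i < size (rotation c A))%N /\
    nth mfun0 (rotation c A) i = nth mfun0 A i.
  move=> i im; rewrite /rotation -/n -/m.
  case: ifP => _.
    by rewrite size_rcons stk nth_rcons stk im nth_take // ltnS ltnW.
  by rewrite stk im nth_take.
split => //.
  move=> i j hi hj hij; case: (ltngtP i j) => h.
  - by left; apply: Hlt.
  - by right; apply: Hlt.
  - by [].
move=> i j hi hj hl.
have [im | mi] := ltnP i m; have [jm | mj] := ltnP j m.
- have [hi' ei] := R1 _ im; have [hj' ej] := R1 _ jm.
  by have := S3 i j hi' hj'; rewrite ei ej => /(_ hl).
- have ej : j = m by apply/eqP; rewrite eqn_leq mj andbT -ltnS prednK.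
  subst j.
  have imn : i <> m by move=> e; rewrite e ltnn in im.
  have fp := @fast_pair _ _ _ _ fA hi hj imn.
  case: hl => hl; first exact: SP_ll.
  apply: SP_sq => //.
  have hcl := Hcirc _ im hl.
  have hasb : has (fun i => (0 < osc (nth mfun0 A i) (nth mfun0 A m))%N) (iota 0 m).
    apply/hasP; exists i; first by rewrite mem_iota.
    apply: osc_pos => //; first exact: Hstd.
    - by case: (Hstd _ hj).
    - by move=> k l hk hl'; apply: (@fast_feet _ A i m fA).
  have hsz : size (rotation c A) = m.+1 by rewrite /rotation -/n -/m hasb size_rcons stk.
  have em : nth mfun0 (rotation c A) m = circ c (nth mfun0 A m).
    by rewrite /rotation -/n -/m hasb nth_rcons stk ltnn eqxx.
  have [hi' ei] := R1 _ im.
  have hm' : (m < size (rotation c A))%N by rewrite hsz.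
  by have := S3 m i hm' hi'; rewrite em ei => /(_ hcl).
- have ei : i = m by apply/eqP; rewrite eqn_leq mi andbT -ltnS prednK.
  subst i; exfalso; apply: (@sLt_asym _ _ _ (Hstd _ hi) (Hstd _ hj) hl).
  exact: Hlt.
- have ei : i = m by apply/eqP; rewrite eqn_leq mi andbT -ltnS prednK.
  have ej : j = m by apply/eqP; rewrite eqn_leq mj andbT -ltnS prednK.
  subst i j; exfalso; exact: (@sLt_irr _ _ (Hstd _ hi) hl).
Qed.
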